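(* Let $k$ be an algebraically closed field of characteristic zero, $A=k[u,v][x,y,z]$, $w=xv-yu$, and let $\partial=u\frac{\partial}{\partial x}+v\frac{\partial}{\partial y}+(1+w)\frac{\partial}{\partial z}$ (a locally nilpotent $k[u,v]$-derivation of $A$). Then the Rees algebra $R(A,\partial)$ is isomorphic to the quotient of the polynomial ring $k[u,v,x,y,z,w,c_1,c_2,\upsilon]$, graded by the weights $\omega_u=\omega_v=\omega_w=\omega_{c_1}=\omega_{c_2}=0$ and $\omega_x=\omega_y=\omega_z=\omega_\upsilon=1$, by the homogeneous ideal $I$ generated by $vc_1-uc_2-w(w+1)$, $c_2x-c_1y+wz$, $w\upsilon+uy-vx$, $c_2\upsilon+vz-(1+w)y$ and $c_1\upsilon+uz-(1+w)x$.
   Context: For a $k$-algebra $A$ with locally nilpotent derivation $\partial$, the Rees algebra is $R(A,\partial)=\bigoplus_{n\geq0}\ker(\partial^{n+1})\upsilon^n\subseteq A[\upsilon]$, graded by $n$. *)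

(* Defs.v *)
From HB Require Import structures.
From mathcomp Require Import all_boot all_order all_algebra.
From mathcomp.multinomials Require Import mpoly.
Set Implicit Arguments. Unset Strict Implicit. Unset Printing Implicit Defensive.
Import Order.TTheory GRing.Theory.
Local Open Scope ring_scope.

(* A = k[u,v][x,y,z] = {mpoly k[5]} with variables
   u = 'X_0, v = 'X_1, x = 'X_2, y = 'X_3, z = 'X_4. *)
Section Defs.
Variable k : fieldType.

Definition Avar (i : nat) : {mpoly k[5]} := 'X_(@inord 4 i).
Definition Au := Avar 0. Definition Av := Avar 1.
Definition Ax := Avar 2. Definition Ay := Avar 3. Definition Az := Avar 4.

Definition Aw : {mpoly k[5]} := Ax * Av - Ay * Au.

Definition Dder (p : {mpoly k[5]}) : {mpoly k[5]} :=
  Au * mderiv (@inord 4 2) p + Av * mderiv (@inord 4 3) p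
  + (1 + Aw) * mderiv (@inord 4 4) p.

(* The Rees algebra R(A, D) = (+)_n ker(D^(n+1)) ups^n inside A[ups],
   with A[ups] = {poly {mpoly k[5]}} (the polynomial variable is ups). *)
Definition in_rees (P : {poly {mpoly k[5]}}) : Prop :=
  forall n : nat, iter n.+1 Dder (P`_n) = 0.

(* S = k[u,v,x,y,z,w,c1,c2,ups] = {mpoly k[9]} with variables
   u='X_0 v='X_1 x='X_2 y='X_3 z='X_4 w='X_5 c1='X_6 c2='X_7 ups='X_8. *)
Definition Svar (i : nat) : {mpoly k[9]} := 'X_(@inord 8 i).
Definition Su := Svar 0. Definition Sv := Svar 1. Definition Sx := Svar 2.
Definition Sy := Svar 3. Definition Sz := Svar 4. Definition Sw := Svar 5.
Definition Sc1 := Svar 6. Definition Sc2 := Svar 7. Definition Sups := Svar 8.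

Definition sweight (m : 'X_{1..9}) : nat :=
  (m (@inord 8 2) + m (@inord 8 3) + m (@inord 8 4) + m (@inord 8 8))%N.

Definition Igen (i : 'I_5) : {mpoly k[9]} :=
  match val i with
  | 0 => Sv * Sc1 - Su * Sc2 - Sw * (Sw + 1)
  | 1 => Sc2 * Sx - Sc1 * Sy + Sw * Sz
  | 2 => Sw * Sups + Su * Sy - Sv * Sx
  | 3 => Sc2 * Sups + Sv * Sz - (1 + Sw) * Sy
  | _ => Sc1 * Sups + Su * Sz - (1 + Sw) * Sx
  end.

Definition in_I (p : {mpoly k[9]}) : Prop :=
  exists q : 'I_5 -> {mpoly k[9]}, p = \sum_(i < 5) q i * Igen i.

End Defs.

(* Main.v *)
Require Import Defs.
From HB Require Import structures.
From mathcomp Require Import all_boot all_order all_algebra.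
From mathcomp.multinomials Require Import mpoly.
From mathcomp Require Import ring zify.
Set Implicit Arguments. Unset Strict Implicit. Unset Printing Implicit Defensive.
Import GRing.Theory.
Local Open Scope ring_scope.

Section Main.
Variable k : fieldType.
Local Notation A := {mpoly k[5]}.
Local Notation S := {mpoly k[9]}.
Local Notation AT := {poly {mpoly k[5]}}.

Definition Ac1 : A := (1 + Aw k) * Ax k - Au k * Az k.
Definition Ac2 : A := (1 + Aw k) * Ay k - Av k * Az k.

Definition img (i : 'I_9) : AT :=
  match val i with
  | 0 => (Au k)%:P | 1 => (Av k)%:P | 2 => (Ax k)%:P * 'X | 3 => (Ay k)%:P * 'X
  | 4 => (Az k)%:P * 'X | 5 => (Aw k)%:P | 6 => Ac1%:P | 7 => Ac2%:P | _ => 'X end.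

Definition phi : {rmorphism S -> AT} := mmap (polyC \o @mpolyC 5 k) img.

Notation "m # i" := (m (@inord 8 i)) (at level 2).

Definition E (m : 'X_{1..9}) : A :=
  Au k ^+ m#0 * Av k ^+ m#1 * Ax k ^+ m#2 * Ay k ^+ m#3 * Az k ^+ m#4
  * Aw k ^+ m#5 * Ac1 ^+ m#6 * Ac2 ^+ m#7.

Lemma prod9 (R : comNzRingType) (F : 'I_9 -> R) :
  \prod_(i < 9) F i = F (inord 0) * F (inord 1) * F (inord 2) * F (inord 3)
    * F (inord 4) * F (inord 5) * F (inord 6) * F (inord 7) * F (inord 8).
Proof.
rewrite !big_ord_recl big_ord0 mulr1 !mulrA.
do 8! (congr (_ * _); last (congr F; apply/val_inj; rewrite /= inordK //)).
by congr F; apply/val_inj; rewrite /= inordK.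
Qed.

Lemma phiX m : phi 'X_[m] = (E m)%:P * 'X^(sweight m).
Proof.
have -> : phi 'X_[m] = mmap (polyC \o @mpolyC 5 k) img 'X_[m] by [].
have vi : forall j, (j < 9)%N -> \val (@inord 8 j) = j by move=> j; apply: inordK.
rewrite mmapX /mmap1 prod9 /img.
rewrite (vi 0%N) // (vi 1%N) // (vi 2%N) // (vi 3%N) // (vi 4%N) // (vi 5%N) // (vi 6%N) // (vi 7%N) // (vi 8%N) //.
rewrite /E /sweight.
rewrite !polyCM.
rewrite !polyC_exp.
move: (m # 0) (m # 1) (m # 2) (m # 3) (m # 4) (m # 5) (m # 6) (m # 7) (m # 8) => n0 n1 n2 n3 n4 n5 n6 n7 n8.
move: ((Au k)%:P) ((Av k)%:P) ((Ax k)%:P) ((Ay k)%:P) ((Az k)%:P) ((Aw k)%:P) (Ac1%:P) (Ac2%:P) ('X : AT) => a0 a1 a2 a3 a4 a5 a6 a7 X.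
rewrite !exprMn !exprD.
ring.
Qed.
End Main.

Section Der.
Variable k : fieldType.
Local Notation A := {mpoly k[5]}.
Local Notation D := (@Dder k).

Lemma DderD p q : D (p + q) = D p + D q.
Proof.
rewrite /Dder !mderivD.
move: (mderiv _ p) (mderiv _ p) (mderiv _ p) (mderiv _ q) (mderiv _ q) (mderiv _ q) => a b c d e f.
ring.
Qed.

Lemma DderM p q : D (p * q) = D p * q + p * D q.
Proof.
rewrite /Dder !mderivM.
move: (mderiv _ p) (mderiv _ p) (mderiv _ p) (mderiv _ q) (mderiv _ q) (mderiv _ q) => a b c d e f.
move: (Au k) (Av k) (Aw k) => U V W.
ring.
Qed.

Lemma DderC c : D c%:MP = 0.
Proof. by rewrite /Dder !mderivC !mulr0 !addr0. Qed.

Lemma Dder0 : D 0 = 0.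
Proof. by rewrite -(mpolyC0 5 k) DderC. Qed.

Lemma DderN p : D (- p) = - D p.
Proof. by apply/eqP; rewrite -subr_eq0 opprK -DderD addNr Dder0. Qed.

Lemma DderB p q : D (p - q) = D p - D q.
Proof. by rewrite DderD DderN. Qed.

Lemma DderCM c p : D (c%:MP * p) = c%:MP * D p.
Proof. by rewrite DderM DderC mul0r add0r. Qed.

Lemma dX (i j : 'I_5) : mderiv i ('X_j : A) = (j == i)%:R.
Proof.
rewrite mderivX mnm1E; case: eqP => [->|_]; last by rewrite scale0r.
have -> : (U_(i) - U_(i) = 0)%MM by apply/mnmP => l; rewrite mnmBE mnm0E subnn.
by rewrite mpolyX0 scale1r.
Qed.

Lemma ieq5 (a b : nat) : (a < 5)%N -> (b < 5)%N ->
  ((@inord 4 a) == (@inord 4 b)) = (a == b).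
Proof. by move=> ha hb; rewrite -val_eqE /= !inordK. Qed.

Lemma DAvar (i : nat) : (i < 5)%N ->
  D (Avar k i) = (i == 2)%:R * Au k + (i == 3)%:R * Av k + (i == 4)%:R * (1 + Aw k).
Proof.
move=> hi; rewrite /Dder /Avar !dX !ieq5 //.
by rewrite !(mulrC (_%:R)).
Qed.

Lemma DAu : D (Au k) = 0. Proof. by rewrite DAvar //= !mul0r !addr0. Qed.
Lemma DAv : D (Av k) = 0. Proof. by rewrite DAvar //= !mul0r !addr0. Qed.
Lemma DAx : D (Ax k) = Au k. Proof. by rewrite DAvar //= !mul0r !mul1r !addr0. Qed.
Lemma DAy : D (Ay k) = Av k. Proof. by rewrite DAvar //= !mul0r !mul1r add0r addr0. Qed.
Lemma DAz : D (Az k) = 1 + Aw k. Proof. by rewrite DAvar //= !mul0r !mul1r !add0r. Qed.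
Lemma DAw : D (Aw k) = 0.
Proof.
rewrite /Aw DderB !DderM DAu DAv DAx DAy.
move: (Au k) (Av k) (Ax k) (Ay k) => U V X Y; ring.
Qed.
Lemma D1 : D 1 = 0. Proof. by rewrite -(mpolyC1 5 k) DderC. Qed.
Lemma DAc1 : D (Ac1 k) = 0.
Proof.
rewrite /Ac1 DderB !DderM DderD D1 DAu DAw DAx DAz.
move: (Au k) (Aw k) (Ax k) (Az k) => U W X Z; ring.
Qed.
Lemma DAc2 : D (Ac2 k) = 0.
Proof.
rewrite /Ac2 DderB !DderM DderD D1 DAv DAw DAy DAz.
move: (Av k) (Aw k) (Ay k) (Az k) => U W X Z; ring.
Qed.

Lemma itD n p q : iter n D (p + q) = iter n D p + iter n D q.
Proof. by elim: n => //= n ->; rewrite DderD. Qed.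
Lemma it0 n : iter n D 0 = 0.
Proof. by elim: n => //= n ->; rewrite Dder0. Qed.
Lemma itN n p : iter n D (- p) = - iter n D p.
Proof. by elim: n => //= n ->; rewrite DderN. Qed.
Lemma itK n a p : D a = 0 -> iter n D (a * p) = a * iter n D p.
Proof. by move=> Da; elim: n => //= n ->; rewrite DderM Da mul0r add0r. Qed.
Lemma itC n c p : iter n D (c%:MP * p) = c%:MP * iter n D p.
Proof. exact/itK/DderC. Qed.
Lemma it_sum n (I : Type) (s : seq I) (F : I -> A) :
  iter n D (\sum_(i <- s) F i) = \sum_(i <- s) iter n D (F i).
Proof.
elim: s => [|a s IH]; first by rewrite !big_nil it0.
by rewrite !big_cons itD IH.
Qed.
Lemma iterSr' n p : iter n.+1 D p = iter n D (D p).
Proof. exact: iterSr. Qed.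
Lemma iter_add m n p : iter (m + n) D p = iter m D (iter n D p).
Proof. exact: ssrnat.iterD. Qed.

Definition degD (f : A) (d : nat) (al : A) := iter d D f = al /\ D al = 0.

Lemma degD_vanish f d al N : degD f d al -> (d < N)%N -> iter N D f = 0.
Proof.
move=> [hf ha] hN; rewrite -(subnK hN) iter_add iterS hf ha; exact: it0.
Qed.

Lemma degD_ker a : D a = 0 -> degD a 0 a.
Proof. by []. Qed.

Lemma degM f g d e al be : degD f d al -> degD g e be ->
  degD (f * g) (d + e) ('C(d + e, d)%:R * al * be).
Proof.
elim: d e f g al be => [|d IHd] e f g al be.
  move=> [/= -> ha] [hg hb]; rewrite bin0 mul1r add0n /degD itK // hg; split=> //.
  by rewrite DderM ha hb mul0r mulr0 addr0.
elim: e f g al be => [|e IHe] f g al be hf hg.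
  case: hg => [/= -> hb]; rewrite addn0 binn mul1r mulrC /degD itK // mulrC.
  case: hf => hf ha; rewrite hf; split=> //.
  by rewrite DderM ha hb mul0r mulr0 addr0.
have hf' : degD (D f) d al by case: hf => hf ha; split=> //; rewrite -iterSr'.
have hg' : degD (D g) e be by case: hg => hg hb; split=> //; rewrite -iterSr'.
have h1 := IHd e.+1 (D f) g al be hf' hg.
have h2 := IHe f (D g) al be hf hg'.
have e1 : (d.+1 + e = d + e.+1)%N by rewrite addSn addnS.
have e2 : (d.+1 + e.+1 = (d + e.+1).+1)%N by rewrite addSn.
rewrite e1 in h2; rewrite e2.
case: h1 => h1a _; case: h2 => h2a _.
split.
  rewrite iterSr' DderM itD h1a h2a binS natrD !mulrDl.
  by rewrite addrC.
case: hf => _ ha; case: hg => _ hb.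
by rewrite -mpolyC_nat -mulrA DderCM DderM ha hb mul0r mulr0 addr0 mulr0.
Qed.

End Der.

Section DegE.
Variable k : fieldType.
Local Notation A := {mpoly k[5]}.
Local Notation D := (@Dder k).
Notation "m # i" := (m (@inord 8 i)) (at level 2).

Definition F (m : 'X_{1..9}) : A :=
  Au k ^+ (m#0 + m#2) * Av k ^+ (m#1 + m#3) * (1 + Aw k) ^+ m#4 * Aw k ^+ m#5
  * Ac1 k ^+ m#6 * Ac2 k ^+ m#7.

Definition dg (m : 'X_{1..9}) := (m#2 + m#3 + m#4)%N.

Lemma DX (a : A) n : D a = 0 -> D (a ^+ n) = 0.
Proof. by move=> Da; elim: n => [|n IH]; rewrite ?expr0 ?D1 // exprS DderM Da IH mul0r mulr0 addr0. Qed.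

Lemma degD_eq (f a b : A) d : degD f d a -> a = b -> degD f d b.
Proof. by move=> h <-. Qed.

Lemma degMK (f a K : A) d : degD f d a -> D K = 0 -> degD (f * K) d (a * K).
Proof.
move=> [hf ha] hK; rewrite /degD mulrC itK // hf; split; first by rewrite mulrC.
by rewrite DderM ha hK mul0r mulr0 addr0.
Qed.

Lemma degXn (f a : A) n : degD f 1 a -> degD (f ^+ n) n (n`!%:R * a ^+ n).
Proof.
move=> hf; elim: n => [|n IH].
  by split; rewrite /= ?expr0 ?mul1r ?D1.
rewrite exprSr; have := degM IH hf; rewrite addn1 => h; apply: degD_eq h _.
rewrite binSn factS natrM exprSr; ring.
Qed.

Lemma degM' (f g a b : A) d e : degD f d a -> degD g e b ->
  degD (f * g) (d + e) ((d + e)`!%:R / (d`!%:R * e`!%:R) * a * b) ->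
  True.
Proof. by []. Qed.

Lemma degMfact (f g a b : A) d e : degD f d (d`!%:R * a) -> degD g e (e`!%:R * b) ->
  degD (f * g) (d + e) ((d + e)`!%:R * (a * b)).
Proof.
move=> hf hg; apply: degD_eq (degM hf hg) _.
rewrite -(bin_fact (leq_addr e d)) addKn !natrM; ring.
Qed.

Lemma degE m : degD (E k m) (dg m) ((dg m)`!%:R * F m).
Proof.
rewrite /E /F /dg.
have hx := degXn (m#2) (conj (DAx k) (DAu k) : degD (Ax k) 1 (Au k)).
have hy := degXn (m#3) (conj (DAy k) (DAv k) : degD (Ay k) 1 (Av k)).
have hz : degD (Az k) 1 (1 + Aw k).
  by split; rewrite /= ?DAz // DderD D1 DAw addr0.
have hz' := degXn (m#4) hz.
have hxyz := degMfact (degMfact hx hy) hz'.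
have h0 : degD (Au k ^+ m#0 * Av k ^+ m#1) 0 (Au k ^+ m#0 * Av k ^+ m#1).
  by split=> //; rewrite DderM !DX ?DAu ?DAv // mul0r mulr0 addr0.
have := degM h0 hxyz; rewrite add0n bin0 mul1r => h1.
have := degMK (degMK (degMK h1 (DX (m#5) (DAw k))) (DX (m#6) (DAc1 k))) (DX (m#7) (DAc2 k)).
move=> h2; rewrite -!mulrA in h2 *; apply: degD_eq h2 _.
rewrite !exprD.
move: (Au k) (Av k) (Aw k) (Ac1 k) (Ac2 k) => U V W C1 C2.
move: (_ `!%:R) => c; ring.
Qed.

End DegE.

Section Phi.
Variable k : fieldType.
Local Notation A := {mpoly k[5]}.
Local Notation S := {mpoly k[9]}.
Local Notation AT := {poly {mpoly k[5]}}.
Local Notation D := (@Dder k).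
Local Notation phi := (phi k).
Notation "m # i" := (m (@inord 8 i)) (at level 2).

Lemma phiC c : phi c%:MP = (c%:MP)%:P.
Proof.
have -> : phi c%:MP = mmap (polyC \o @mpolyC 5 k) (img k) c%:MP by [].
by rewrite mmapC.
Qed.

Lemma phiZX c m : phi (c *: 'X_[m]) = (c%:MP * E k m) *: 'X^(sweight m).
Proof. by rewrite -mul_mpolyC rmorphM phiC phiX mulrA -polyCM mul_polyC. Qed.

Lemma phiE p : phi p = \sum_(m <- msupp p) ((p@_m)%:MP * E k m) *: 'X^(sweight m).
Proof.
rewrite {1}(mpolyE p) rmorph_sum; apply: eq_bigr => m _; exact: phiZX.
Qed.

Lemma phi_coef p n :
  (phi p)`_n = \sum_(m <- msupp p | sweight m == n) (p@_m)%:MP * E k m.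
Proof. by rewrite phiE coef_sumMXn. Qed.

Lemma dg_le m : (dg m <= sweight m)%N.
Proof. by rewrite /dg /sweight leq_addr. Qed.

Lemma phi_rees p : in_rees (phi p).
Proof.
move=> n; rewrite phi_coef -big_filter it_sum big_filter.
rewrite big1 // => m /eqP hm.
rewrite itC (degD_vanish (degE k m)) ?mulr0 //.
by rewrite ltnS -hm dg_le.
Qed.

Lemma phiS j : (j < 9)%N -> phi (Svar k j) = img k (inord j).
Proof.
move=> hj.
have -> : phi (Svar k j) = mmap (polyC \o @mpolyC 5 k) (img k) (Svar k j) by [].
by rewrite /Svar mmapX mmap1U.
Qed.

Lemma vi j : (j < 9)%N -> \val (@inord 8 j) = j.
Proof. by move=> hj; apply: inordK. Qed.

Lemma phiSu : phi (Su k) = (Au k)%:P. Proof. by rewrite phiS // /img vi. Qed.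
Lemma phiSv : phi (Sv k) = (Av k)%:P. Proof. by rewrite phiS // /img vi. Qed.
Lemma phiSx : phi (Sx k) = (Ax k)%:P * 'X. Proof. by rewrite phiS // /img vi. Qed.
Lemma phiSy : phi (Sy k) = (Ay k)%:P * 'X. Proof. by rewrite phiS // /img vi. Qed.
Lemma phiSz : phi (Sz k) = (Az k)%:P * 'X. Proof. by rewrite phiS // /img vi. Qed.
Lemma phiSw : phi (Sw k) = (Aw k)%:P. Proof. by rewrite phiS // /img vi. Qed.
Lemma phiSc1 : phi (Sc1 k) = (Ac1 k)%:P. Proof. by rewrite phiS // /img vi. Qed.
Lemma phiSc2 : phi (Sc2 k) = (Ac2 k)%:P. Proof. by rewrite phiS // /img vi. Qed.
Lemma phiSt : phi (Sups k) = 'X. Proof. by rewrite phiS // /img vi. Qed.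

Lemma Pw : (Aw k)%:P = (Ax k)%:P * (Av k)%:P - (Ay k)%:P * (Au k)%:P :> AT.
Proof. by rewrite /Aw polyCB !polyCM. Qed.
Lemma Pc1 : (Ac1 k)%:P = (1 + (Aw k)%:P) * (Ax k)%:P - (Au k)%:P * (Az k)%:P :> AT.
Proof. by rewrite /Ac1 polyCB !polyCM polyCD. Qed.
Lemma Pc2 : (Ac2 k)%:P = (1 + (Aw k)%:P) * (Ay k)%:P - (Av k)%:P * (Az k)%:P :> AT.
Proof. by rewrite /Ac2 polyCB !polyCM polyCD. Qed.

Lemma phiIgen i : phi (Igen k i) = 0.
Proof.
case: i => [[|[|[|[|[|i]]]]] hi]; rewrite /Igen /=.
- rewrite !(rmorphB, rmorphD, rmorphM, rmorph1) phiSu phiSv phiSw phiSc1 phiSc2 Pc1 Pc2 Pw.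
  move: (Au k)%:P (Av k)%:P (Ax k)%:P (Ay k)%:P (Az k)%:P => U V X Y Z; ring.
- rewrite !(rmorphB, rmorphD, rmorphM, rmorph1) phiSx phiSy phiSz phiSw phiSc1 phiSc2 Pc1 Pc2 Pw.
  move: (Au k)%:P (Av k)%:P (Ax k)%:P (Ay k)%:P (Az k)%:P ('X : AT) => U V X Y Z T; ring.
- rewrite !(rmorphB, rmorphD, rmorphM, rmorph1) phiSu phiSv phiSx phiSy phiSw phiSt Pw.
  move: (Au k)%:P (Av k)%:P (Ax k)%:P (Ay k)%:P ('X : AT) => U V X Y T; ring.
- rewrite !(rmorphB, rmorphD, rmorphM, rmorph1) phiSv phiSz phiSy phiSw phiSc2 phiSt Pc2 Pw.
  move: (Au k)%:P (Av k)%:P (Ax k)%:P (Ay k)%:P (Az k)%:P ('X : AT) => U V X Y Z T; ring.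
- rewrite !(rmorphB, rmorphD, rmorphM, rmorph1) phiSu phiSz phiSx phiSw phiSc1 phiSt Pc1 Pw.
  move: (Au k)%:P (Av k)%:P (Ax k)%:P (Ay k)%:P (Az k)%:P ('X : AT) => U V X Y Z T; ring.
- by [].
Qed.

End Phi.

Notation "m # i" := (m (@inord 8 i)) (at level 2).

Definition std (m : 'X_{1..9}) : bool :=
  [&& (m#5 < 2)%N, (m#4 == 0%N) || (m#5 == 0%N), (m#1 == 0%N) || (m#2 == 0%N),
      (m#1 == 0%N) || (m#4 == 0%N) & (m#0 == 0%N) || (m#4 == 0%N)].

Definition rho (m : 'X_{1..9}) : nat :=
  (m#0 + m#1 + 2 * m#2 + m#3 + 3 * m#4 + m#5)%N.

Lemma ieq9 (a b : nat) : (a < 9)%N -> (b < 9)%N ->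
  ((@inord 8 a) == (@inord 8 b)) = (a == b).
Proof. by move=> ha hb; rewrite -val_eqE /= !inordK. Qed.

Lemma mU (m : 'X_{1..9}) a b : (a < 9)%N -> (b < 9)%N ->
  (m + U_(@inord 8 a))%MM (@inord 8 b) = (m#b + (a == b))%N.
Proof. by move=> ha hb; rewrite mnmDE mnm1E ieq9. Qed.

Lemma splitm (m : 'X_{1..9}) (a : 'I_9) : (0 < m a)%N -> m = ((m - U_(a)) + U_(a))%MM.
Proof.
move=> h; apply/mnmP => i; rewrite mnmDE mnmBE mnm1E.
by case: eqP => [<-|_]; rewrite ?addn0 ?subn0 // subnK.
Qed.

Section Red.
Variable k : fieldType.
Local Notation S := {mpoly k[9]}.
Local Notation Y := (Svar k).

Lemma inI0 : in_I (0 : S).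
Proof. by exists (fun _ => 0); rewrite big1 // => i _; rewrite mul0r. Qed.

Lemma inID (a b : S) : in_I a -> in_I b -> in_I (a + b).
Proof.
move=> [qa ->] [qb ->]; exists (fun i => qa i + qb i).
by rewrite -big_split; apply: eq_bigr => i _; rewrite mulrDl.
Qed.

Lemma inIM (c a : S) : in_I a -> in_I (c * a).
Proof.
move=> [qa ->]; exists (fun i => c * qa i).
by rewrite mulr_sumr; apply: eq_bigr => i _; rewrite mulrA.
Qed.

Lemma inIN (a : S) : in_I a -> in_I (- a).
Proof. by move=> h; rewrite -mulN1r; apply: inIM. Qed.

Lemma inIgen j : in_I (Igen k j).
Proof.
exists (fun i => (i == j)%:R); rewrite (bigD1 j) //= eqxx mul1r big1 ?addr0 //.
by move=> i /negbTE ->; rewrite mul0r.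
Qed.

Definition std_supp (r : S) := forall m, m \in msupp r -> std m.

Definition Red (p : S) := exists r, std_supp r /\ in_I (p - r).

Lemma RedD p q : Red p -> Red q -> Red (p + q).
Proof.
move=> [r1 [h1 i1]] [r2 [h2 i2]]; exists (r1 + r2); split.
  by move=> m /msuppD_le; rewrite mem_cat => /orP [/h1|/h2].
have -> : p + q - (r1 + r2) = (p - r1) + (q - r2) by ring.
exact: inID.
Qed.

Lemma RedZ c p : Red p -> Red (c *: p).
Proof.
move=> [r [h i]]; exists (c *: r); split.
  by move=> m /msuppZ_le /h.
rewrite -scalerBr -mul_mpolyC; exact: inIM.
Qed.

Lemma RedN p : Red p -> Red (- p).
Proof. by move=> h; rewrite -scaleN1r; apply: RedZ. Qed.

Lemma RedI q : in_I q -> Red q.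
Proof. by move=> h; exists 0; split; [move=> m; rewrite msupp0 | rewrite subr0]. Qed.

Lemma RedX m : std m -> Red 'X_[m].
Proof.
move=> h; exists 'X_[m]; split; last by rewrite subrr; exact: inI0.
by move=> m'; rewrite msuppX inE => /eqP ->.
Qed.

Lemma XU (m : 'X_{1..9}) a : 'X_[(m + U_(@inord 8 a))%MM] = 'X_[m] * Y a :> S.
Proof. by rewrite mpolyXD. Qed.

Lemma dec2 (m : 'X_{1..9}) a b : (a < 9)%N -> (b < 9)%N -> (0 < m#a)%N ->
  (0 < (m - U_(@inord 8 a))%MM#b)%N ->
  exists m', m = (m' + U_(@inord 8 b) + U_(@inord 8 a))%MM.
Proof.
move=> ha hb h1 h2; exists (m - U_(@inord 8 a) - U_(@inord 8 b))%MM.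
by rewrite -splitm // -splitm.
Qed.

Lemma Red_comb (x p1 p2 p3 q : S) : x = p1 + p2 + p3 + q ->
  Red p1 -> Red p2 -> Red p3 -> in_I q -> Red x.
Proof. by move=> -> h1 h2 h3 h4; apply: RedD; [apply: RedD; [apply: RedD|]|apply: RedI]. Qed.

Lemma vi5 j : (j < 5)%N -> \val (@inord 4 j) = j.
Proof. by move=> hj; apply: inordK. Qed.

Lemma Red0 : Red 0. Proof. exact/RedI/inI0. Qed.

Lemma Red_mon N m : (rho m < N)%N -> Red 'X_[m].
Proof.
elim: N m => [//|N IH] m hN.
case hs: (std m); first exact: RedX.
have IH' : forall m', (rho m' < rho m)%N -> Red 'X_[m'].
  move=> m' h; apply: IH; lia.
move: hs; rewrite /std.
have [h5|h5] := leqP 2 (m#5).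
  move=> _; have [m' em] : exists m', m = (m' + U_(@inord 8 5) + U_(@inord 8 5))%MM.
    by apply: dec2 => //; [lia | rewrite mnmBE mnm1E eqxx; lia].
  rewrite em in IH' *.
  apply: (@Red_comb _ ('X_[(m' + U_(@inord 8 1) + U_(@inord 8 6))%MM])
     (- 'X_[(m' + U_(@inord 8 0) + U_(@inord 8 7))%MM])
     (- 'X_[(m' + U_(@inord 8 5))%MM]) ('X_[m'] * - Igen k (@inord 4 0))).
  - rewrite !XU /Igen vi5 //.
    rewrite /Su /Sv /Sw /Sc1 /Sc2.
    move: 'X_[m'] (Y 0) (Y 1) (Y 5) (Y 6) (Y 7) => M U V W C1 C2; ring.
  - by apply: IH'; rewrite /rho !mU //=; lia.
  - by apply/RedN/IH'; rewrite /rho !mU //=; lia.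
  - by apply/RedN/IH'; rewrite /rho !mU //=; lia.
  - exact/inIM/inIN/inIgen.
rewrite /=.
have [h45|h45] := boolP ((m#4 == 0%N) || (m#5 == 0%N)); rewrite ?h45 /=; last first.
  move=> _.
    have [m' em] := @dec2 m 4 5 erefl erefl (ltac:(lia)) (ltac:(rewrite mnmBE mnm1E ieq9 //=; lia)).
    rewrite em in IH' *.
    apply: (@Red_comb _ ('X_[((m' + U_(@inord 8 3))%MM + U_(@inord 8 6))%MM]) (- 'X_[((m' + U_(@inord 8 2))%MM + U_(@inord 8 7))%MM]) (0) ('X_[m'] * Igen k (@inord 4 1))).
    - rewrite !XU /Igen vi5 //.
      rewrite /Su /Sv /Sx /Sy /Sz /Sw /Sc1 /Sc2 /Sups.
      move: 'X_[m'] (Y 0) (Y 1) (Y 2) (Y 3) (Y 4) (Y 5) (Y 6) (Y 7) (Y 8) => M U V X0 Y0 Z W C1 C2 T; ring.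
    - by apply: IH'; rewrite /rho !mU //=; lia.
    - by apply/RedN/IH'; rewrite /rho !mU //=; lia.
    - exact: Red0.
    - exact/inIM/inIgen.
have [h12|h12] := boolP ((m#1 == 0%N) || (m#2 == 0%N)); rewrite ?h12 /=; last first.
  move=> _.
    have [m' em] := @dec2 m 1 2 erefl erefl (ltac:(lia)) (ltac:(rewrite mnmBE mnm1E ieq9 //=; lia)).
    rewrite em in IH' *.
    apply: (@Red_comb _ ('X_[((m' + U_(@inord 8 8))%MM + U_(@inord 8 5))%MM]) ('X_[((m' + U_(@inord 8 3))%MM + U_(@inord 8 0))%MM]) (0) ('X_[m'] * - Igen k (@inord 4 2))).
    - rewrite !XU /Igen vi5 //.
      rewrite /Su /Sv /Sx /Sy /Sz /Sw /Sc1 /Sc2 /Sups.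
      move: 'X_[m'] (Y 0) (Y 1) (Y 2) (Y 3) (Y 4) (Y 5) (Y 6) (Y 7) (Y 8) => M U V X0 Y0 Z W C1 C2 T; ring.
    - by apply: IH'; rewrite /rho !mU //=; lia.
    - by apply: IH'; rewrite /rho !mU //=; lia.
    - exact: Red0.
    - exact/inIM/inIN/inIgen.
have [h14|h14] := boolP ((m#1 == 0%N) || (m#4 == 0%N)); rewrite ?h14 /=; last first.
  move=> _.
    have [m' em] := @dec2 m 1 4 erefl erefl (ltac:(lia)) (ltac:(rewrite mnmBE mnm1E ieq9 //=; lia)).
    rewrite em in IH' *.
    apply: (@Red_comb _ ('X_[(m' + U_(@inord 8 3))%MM]) ('X_[((m' + U_(@inord 8 3))%MM + U_(@inord 8 5))%MM]) (- 'X_[((m' + U_(@inord 8 7))%MM + U_(@inord 8 8))%MM]) ('X_[m'] * Igen k (@inord 4 3))).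
    - rewrite !XU /Igen vi5 //.
      rewrite /Su /Sv /Sx /Sy /Sz /Sw /Sc1 /Sc2 /Sups.
      move: 'X_[m'] (Y 0) (Y 1) (Y 2) (Y 3) (Y 4) (Y 5) (Y 6) (Y 7) (Y 8) => M U V X0 Y0 Z W C1 C2 T; ring.
    - by apply: IH'; rewrite /rho !mU //=; lia.
    - by apply: IH'; rewrite /rho !mU //=; lia.
    - by apply/RedN/IH'; rewrite /rho !mU //=; lia.
    - exact/inIM/inIgen.
move=> h04.
  have [m' em] := @dec2 m 0 4 erefl erefl (ltac:(lia)) (ltac:(rewrite mnmBE mnm1E ieq9 //=; lia)).
  rewrite em in IH' *.
  apply: (@Red_comb _ ('X_[(m' + U_(@inord 8 2))%MM]) ('X_[((m' + U_(@inord 8 2))%MM + U_(@inord 8 5))%MM]) (- 'X_[((m' + U_(@inord 8 6))%MM + U_(@inord 8 8))%MM]) ('X_[m'] * Igen k (@inord 4 4))).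
  - rewrite !XU /Igen vi5 //.
    rewrite /Su /Sv /Sx /Sy /Sz /Sw /Sc1 /Sc2 /Sups.
    move: 'X_[m'] (Y 0) (Y 1) (Y 2) (Y 3) (Y 4) (Y 5) (Y 6) (Y 7) (Y 8) => M U V X0 Y0 Z W C1 C2 T; ring.
  - by apply: IH'; rewrite /rho !mU //=; lia.
  - by apply: IH'; rewrite /rho !mU //=; lia.
  - by apply/RedN/IH'; rewrite /rho !mU //=; lia.
  - exact/inIM/inIgen.
Qed.

End Red.

Lemma Red_all (k : fieldType) (p : {mpoly k[9]}) : Red p.
Proof.
rewrite (mpolyE p); elim: (msupp p) => [|m s IH]; first by rewrite big_nil; exact: Red0.
rewrite big_cons; apply: RedD => //; apply: RedZ; exact: (@Red_mon k (rho m).+1).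
Qed.

Section Psi.
Variable k : fieldType.
Local Notation A := {mpoly k[5]}.
Local Notation P := {poly {mpoly k[5]}}.

Definition wt5 (j : nat) : nat :=
  match j with 0 => 1 | 1 => 2 | 2 => 3 | 3 => 2 | _ => 1 end%N.
Definition pimg (i : 'I_5) : P := ('X_i)%:P * 'X^(wt5 i).
Definition psi : {rmorphism A -> P} := mmap (polyC \o @mpolyC 5 k) pimg.

Lemma psiC c : psi c%:MP = (c%:MP)%:P.
Proof.
have -> : psi c%:MP = mmap (polyC \o @mpolyC 5 k) pimg c%:MP by [].
by rewrite mmapC.
Qed.

Lemma psiZ c (q : A) : psi (c *: q) = (c%:MP)%:P * psi q.
Proof. by rewrite -mul_mpolyC rmorphM psiC. Qed.

Lemma psiV j : (j < 5)%N -> psi (Avar k j) = (Avar k j)%:P * 'X^(wt5 j).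
Proof.
move=> hj.
have -> : psi (Avar k j) = mmap (polyC \o @mpolyC 5 k) pimg (Avar k j) by [].
by rewrite /Avar mmapX mmap1U /pimg vi5.
Qed.

Definition top (q : P) (d : nat) (M : A) := [/\ size q = d.+1, lead_coef q = M & M != 0].

Lemma top_ne0 (q : P) d M : top q d M -> q != 0.
Proof. by case=> hs _ _; rewrite -size_poly_eq0 hs. Qed.

Lemma top_eq (q : P) d d' M M' : top q d M -> d = d' -> M = M' -> top q d' M'.
Proof. by move=> h <- <-. Qed.

Lemma topM (q1 q2 : P) d1 d2 M1 M2 : top q1 d1 M1 -> top q2 d2 M2 -> top (q1 * q2) (d1 + d2) (M1 * M2).
Proof.
move=> h1 h2; have n1 := top_ne0 h1; have n2 := top_ne0 h2.
case: h1 => s1 l1 m1; case: h2 => s2 l2 m2.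
split; first by rewrite size_mul // s1 s2 addSn addnS.
  by rewrite lead_coefM l1 l2.
by rewrite mulf_neq0.
Qed.

Lemma top1 : top 1 0 1.
Proof. by split; rewrite ?size_poly1 ?lead_coef1 ?oner_neq0. Qed.

Lemma topX (q : P) d M n : top q d M -> top (q ^+ n) (d * n) (M ^+ n).
Proof.
move=> h; elim: n => [|n IH]; first by rewrite muln0 !expr0; exact: top1.
rewrite !exprSr mulnS addnC; exact: topM.
Qed.

Lemma topD (q1 q2 : P) d M : top q1 d M -> (size q2 <= d)%N -> top (q1 + q2) d M.
Proof.
case=> s1 l1 m1 hs; have lt : (size q2 < size q1)%N by rewrite s1 ltnS.
by split; rewrite ?size_addl ?lead_coefDl.
Qed.

Lemma topB (q1 q2 : P) d M : top q1 d M -> (size q2 <= d)%N -> top (q1 - q2) d M.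
Proof. by move=> h hs; apply: topD; rewrite // size_opp. Qed.

Lemma Avar_neq0 j : Avar k j != 0.
Proof.
apply/eqP => h; have := congr1 (mcoeff (U_(@inord 4 j))%MM) h.
by rewrite /Avar mcoeffX eqxx mcoeff0 => /eqP; rewrite oner_eq0.
Qed.

Lemma topV j : (j < 5)%N -> top (psi (Avar k j)) (wt5 j) (Avar k j).
Proof.
move=> hj; rewrite psiV // mul_polyC; have nz := Avar_neq0 j.
split=> //; first by rewrite size_scale // size_polyXn.
by rewrite lead_coefZ lead_coefXn mulr1.
Qed.

Lemma size_topV j : (j < 5)%N -> size (psi (Avar k j)) = (wt5 j).+1.
Proof. by move=> hj; case: (topV hj). Qed.

Lemma size_prodV i j : (i < 5)%N -> (j < 5)%N ->
  size (psi (Avar k i) * psi (Avar k j)) = (wt5 i + wt5 j).+1.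
Proof. by move=> hi hj; case: (topM (topV hi) (topV hj)). Qed.

Definition Mw : A := Ax k * Av k.

Lemma topw : top (psi (Aw k)) 5 Mw.
Proof.
rewrite /Aw rmorphB !rmorphM; apply: topB.
  exact: (topM (topV (j:=2) erefl) (topV (j:=1) erefl)).
by rewrite (size_prodV (i:=3) (j:=0)).
Qed.

Lemma top1w : top (psi (1 + Aw k)) 5 Mw.
Proof.
rewrite rmorphD rmorph1 addrC; apply: topD; first exact: topw.
by rewrite size_poly1.
Qed.

Lemma topc1 : top (psi (Ac1 k)) 8 (Mw * Ax k).
Proof.
rewrite /Ac1 rmorphB !rmorphM; apply: topB.
  exact: (topM top1w (topV (j:=2) erefl)).
by rewrite (size_prodV (i:=0) (j:=4)).
Qed.

Lemma topc2 : top (psi (Ac2 k)) 7 (Mw * Ay k).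
Proof.
rewrite /Ac2 rmorphB !rmorphM; apply: topB.
  exact: (topM top1w (topV (j:=3) erefl)).
by rewrite (size_prodV (i:=1) (j:=4)).
Qed.

Definition degF (m : 'X_{1..9}) : nat :=
  ((m#0 + m#2) + 2 * (m#1 + m#3) + 5 * m#4 + 5 * m#5 + 8 * m#6 + 7 * m#7)%N.

Definition MF (m : 'X_{1..9}) : A :=
  Au k ^+ (m#0 + m#2) * Av k ^+ (m#1 + m#3) * Mw ^+ m#4 * Mw ^+ m#5
  * (Mw * Ax k) ^+ m#6 * (Mw * Ay k) ^+ m#7.

Lemma topF m : top (psi (F k m)) (degF m) (MF m).
Proof.
rewrite /F !rmorphM.
have hu := topX (m#0 + m#2) (topV (j:=0) erefl).
have hv := topX (m#1 + m#3) (topV (j:=1) erefl).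
have h4 := topX (m#4) top1w.
have h5 := topX (m#5) topw.
have h6 := topX (m#6) topc1.
have h7 := topX (m#7) topc2.
rewrite !rmorphXn.
apply: top_eq (topM (topM (topM (topM (topM hu hv) h4) h5) h6) h7) _ _ => //.
rewrite /degF /=; lia.
Qed.

End Psi.

Definition mu (m : 'X_{1..9}) : 'X_{1..5} :=
  (U_(@inord 4 0) *+ (m#0 + m#2) + U_(@inord 4 1) *+ (m#1 + m#3 + m#4 + m#5 + m#6 + m#7)
   + U_(@inord 4 2) *+ (m#4 + m#5 + (m#6 + m#6) + m#7) + U_(@inord 4 3) *+ m#7)%MM.

Lemma muE (m : 'X_{1..9}) j : (j < 5)%N -> mu m (@inord 4 j) =
  ((j == 0) * (m#0 + m#2) + (j == 1) * (m#1 + m#3 + m#4 + m#5 + m#6 + m#7)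
   + (j == 2) * (m#4 + m#5 + (m#6 + m#6) + m#7) + (j == 3) * m#7)%N.
Proof.
move=> hj; rewrite /mu !mnmDE !mulmnE !mnm1E !ieq5 //.
by rewrite ![_ == j]eq_sym.
Qed.

Definition sep (s : seq 'X_{1..9}) :=
  forall m1 m2, m1 \in s -> m2 \in s -> (forall i, (i < 8)%N -> m1#i = m2#i) -> m1 = m2.

Lemma mu_inj m1 m2 : std m1 -> std m2 -> dg m1 = dg m2 -> mu m1 = mu m2 ->
  forall i, (i < 8)%N -> m1#i = m2#i.
Proof.
move=> h1 h2 hd hmu.
have e0 := congr1 (fun m : 'X_{1..5} => m (@inord 4 0)) hmu.
have e1 := congr1 (fun m : 'X_{1..5} => m (@inord 4 1)) hmu.
have e2 := congr1 (fun m : 'X_{1..5} => m (@inord 4 2)) hmu.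
have e3 := congr1 (fun m : 'X_{1..5} => m (@inord 4 3)) hmu.
rewrite /= !muE //= in e0 e1 e2 e3.
move: h1 h2 hd; rewrite /std /dg => h1 h2 hd.
move=> i hi.
have : (m1#0 = m2#0 /\ m1#1 = m2#1 /\ m1#2 = m2#2 /\ m1#3 = m2#3) /\
       (m1#4 = m2#4 /\ m1#5 = m2#5 /\ m1#6 = m2#6 /\ m1#7 = m2#7) by lia.
by case: i hi => [|[|[|[|[|[|[|[|i]]]]]]]] // _; lia.
Qed.

Section FInd.
Variable k : fieldType.
Local Notation A := {mpoly k[5]}.
Local Notation P := {poly {mpoly k[5]}}.

Lemma MF_mu m : MF k m = 'X_[mu m].
Proof.
rewrite /MF /Mw /mu /Au /Av /Ax /Ay /Avar !mpolyXD -!mpolyXn.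
move: (m#0) (m#1) (m#2) (m#3) (m#4) (m#5) (m#6) (m#7) => a b c d e f g h.
move: ('X_(@inord 4 0) : A) ('X_(@inord 4 1) : A) ('X_(@inord 4 2) : A) ('X_(@inord 4 3) : A) => U V X Y.
rewrite !exprMn !exprD; ring.
Qed.

Lemma coef_top (q : P) d M d' : top q d M -> (d <= d')%N -> q`_d' = if d == d' then M else 0.
Proof.
case=> hs hl _ hd; case: eqP => [<-|ne].
  by rewrite -hl lead_coefE hs.
by apply: nth_default; rewrite hs; lia.
Qed.

Lemma exmax (T : eqType) (s : seq T) (f : T -> nat) x0 : x0 \in s ->
  exists m0, m0 \in s /\ forall m, m \in s -> (f m <= f m0)%N.
Proof.
elim: s x0 => [//|a s IH] x0 _.
case: s IH => [|b s] IH.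
  by exists a; split=> [|m]; rewrite ?mem_seq1 ?eqxx // => /eqP ->.
have [m1 [h1 h2]] := IH b (mem_head _ _).
have [le|lt] := leqP (f a) (f m1).
  exists m1; split; first by rewrite in_cons h1 orbT.
  by move=> m; rewrite in_cons => /orP [/eqP ->|/h2].
exists a; split; first exact: mem_head.
move=> m; rewrite in_cons => /orP [/eqP ->//|/h2 h]; lia.
Qed.

Definition Lf d (n : 'X_{1..5}) (q : A) : k := ((psi k q)`_d)@_n.

Lemma LfD d n a b : Lf d n (a + b) = Lf d n a + Lf d n b.
Proof. by rewrite /Lf rmorphD coefD mcoeffD. Qed.

Lemma Lf0 d n : Lf d n 0 = 0.
Proof. by rewrite /Lf rmorph0 coef0 mcoeff0. Qed.

Lemma Lf_sum d n (s : seq 'X_{1..9}) (G : 'X_{1..9} -> A) :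
  Lf d n (\sum_(m <- s) G m) = \sum_(m <- s) Lf d n (G m).
Proof.
elim: s => [|a s IH]; first by rewrite !big_nil Lf0.
by rewrite !big_cons LfD IH.
Qed.

Lemma LfF d n c m : (degF m <= d)%N ->
  Lf d n (c *: F k m) = c * (if degF m == d then (mu m == n)%:R else 0).
Proof.
move=> hd; rewrite /Lf psiZ coefCM (coef_top (topF k m) hd) MF_mu.
by case: eqP => _; rewrite mcoeffCM ?mcoeffX ?mcoeff0.
Qed.

Lemma F_indep (s : seq 'X_{1..9}) (lam : 'X_{1..9} -> k) Dd :
  uniq s -> {in s, forall m, std m} -> {in s, forall m, dg m = Dd} -> sep s ->
  \sum_(m <- s) lam m *: F k m = 0 -> {in s, forall m, lam m = 0}.
Proof.
move=> us hstd hdg hsep hsum.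
set s' := [seq m <- s | lam m != 0].
suff e : s' = [::].
  move=> m ms; apply/eqP; apply: contraT => hl.
  have : m \in s' by rewrite mem_filter hl ms.
  by rewrite e.
case E: s' => [//|m1 t]; exfalso.
have : m1 \in s' by rewrite E mem_head.
move=> /(exmax (@degF)) [m0 [m0s hmax]].
have hsum' : \sum_(m <- s') lam m *: F k m = 0.
  rewrite -[RHS]hsum big_filter big_mkcond; apply: eq_bigr => m _ /=.
  by case: eqP => [->|//]; rewrite scale0r.
have us' : uniq s' by rewrite filter_uniq.
have hs' : forall m, m \in s' -> m \in s /\ lam m != 0.
  by move=> m; rewrite mem_filter => /andP [].
have := congr1 (Lf (degF m0) (mu m0)) hsum'.
rewrite Lf_sum Lf0 (bigD1_seq m0) //=.
rewrite big1_seq; last first.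
  move=> m /andP [ne ms].
  rewrite (LfF _ _ (hmax m ms)).
  case: eqP => _; last by rewrite mulr0.
  case: eqP => em; last by rewrite mulr0.
  exfalso; move: ne; have [ms1 _] := hs' m ms; have [m0s1 _] := hs' m0 m0s.
  rewrite (hsep m m0) ?eqxx //.
  apply: mu_inj => //; [exact: hstd | exact: hstd | by rewrite !hdg].
rewrite addr0 (LfF _ _ (leqnn _)) !eqxx mulr1.
by move=> h; have [_] := hs' m0 m0s; rewrite h eqxx.
Qed.

End FInd.

Section G.
Variable k : fieldType.
Hypothesis hk : [pchar k] =i pred0.
Local Notation A := {mpoly k[5]}.
Local Notation D := (@Dder k).

Lemma fact_neq0 n : (n`!%:R : A) != 0.
Proof.
rewrite -mpolyC_nat mpolyC_eq0 ((pcharf0P k).1 hk).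
by rewrite -lt0n fact_gt0.
Qed.

Lemma G_bound (s : seq 'X_{1..9}) (lam : 'X_{1..9} -> k) n :
  uniq s -> {in s, forall m, std m} -> sep s ->
  iter n D (\sum_(m <- s) (lam m)%:MP * E k m) = 0 ->
  forall m, m \in s -> (n <= dg m)%N -> lam m = 0.
Proof.
move=> us hstd hsep hit.
set s' := [seq m <- s | (n <= dg m)%N && (lam m != 0)].
suff e : s' = [::].
  move=> m ms hn; apply/eqP; apply: contraT => hl.
  have : m \in s' by rewrite mem_filter hl hn ms.
  by rewrite e.
case Es: s' => [//|m1 t]; exfalso.
have : m1 \in s' by rewrite Es mem_head.
move=> /(exmax (@dg)) [m0 [m0s hmax]].
have [m0s1 /andP [hn0 hl0]] : m0 \in s /\ (n <= dg m0)%N && (lam m0 != 0).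
  by move: m0s; rewrite mem_filter => /andP [-> ->].
set Dm := dg m0.
have hD : iter Dm D (\sum_(m <- s) (lam m)%:MP * E k m) = 0.
  by rewrite /Dm -(subnK hn0) iter_add hit it0.
have hsum : iter Dm D (\sum_(m <- s) (lam m)%:MP * E k m) =
    Dm`!%:R * \sum_(m <- s | dg m == Dm) lam m *: F k m.
  rewrite it_sum mulr_sumr [RHS]big_mkcond /=; apply: eq_big_seq => m ms.
  rewrite itC; case: eqP => hm.
    have [h _] := degE k m; rewrite -hm h hm.
    rewrite -mul_mpolyC; move: (_%:MP) (_%:R : A) (F k m) => a b c; ring.
  have [lt|gt] := ltnP (dg m) Dm.
    by rewrite (degD_vanish (degE k m) lt) mulr0.
  have -> : lam m = 0.
    apply/eqP; apply: contraT => hl.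
    have ms' : m \in s' by rewrite mem_filter hl ms andbT; lia.
    have := hmax m ms'; rewrite -/Dm; lia.
  by rewrite mpolyC0 mul0r.
move: hD; rewrite hsum => /eqP; rewrite mulf_eq0 (negbTE (fact_neq0 _)) /= => /eqP hF.
have := @F_indep k [seq m <- s | dg m == Dm] lam Dm.
rewrite big_filter => /(_ _ _ _ _ hF) h.
have : lam m0 = 0.
  apply: h.
  - exact: filter_uniq.
  - by move=> m; rewrite mem_filter => /andP [_ /hstd].
  - by move=> m; rewrite mem_filter => /andP [/eqP].
  - by move=> m1' m2' ; rewrite !mem_filter => /andP [_ h1] /andP [_ h2]; apply: hsep.
  - by rewrite mem_filter eqxx m0s1.
by move/eqP; rewrite (negbTE hl0).
Qed.

End G.

Lemma prod5 (R : comNzRingType) (G : 'I_5 -> R) :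
  \prod_(i < 5) G i = G (inord 0) * G (inord 1) * G (inord 2) * G (inord 3) * G (inord 4).
Proof.
rewrite !big_ord_recl big_ord0 mulr1 !mulrA.
do 4! (congr (_ * _); last (congr G; apply/val_inj; rewrite /= inordK //)).
by congr G; apply/val_inj; rewrite /= inordK.
Qed.

Lemma sum5 (G : 'I_5 -> nat) :
  (\sum_(i < 5) G i = G (inord 0) + G (inord 1) + G (inord 2) + G (inord 3) + G (inord 4))%N.
Proof.
rewrite !big_ord_recl big_ord0 addn0 !addnA.
do 4! (congr (_ + _)%N; last (congr G; apply/val_inj; rewrite /= inordK //)).
by congr G; apply/val_inj; rewrite /= inordK.
Qed.

Lemma eq9 (m1 m2 : 'X_{1..9}) : (forall i, (i < 9)%N -> m1#i = m2#i) -> m1 = m2.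
Proof.
move=> h; apply/mnmP => i; have := h (val i) (ltn_ord i).
by rewrite inord_val.
Qed.

Lemma sep_sw (s : seq 'X_{1..9}) N : sep [seq m <- s | sweight m == N].
Proof.
move=> m1 m2; rewrite !mem_filter => /andP [/eqP h1 _] /andP [/eqP h2 _] h.
apply: eq9 => i hi; have [lt|ge] := ltnP i 8; first exact: h.
have e : i = 8%N by lia.
move: h1 h2; rewrite e /sweight (h 2%N) // (h 3%N) // (h 4%N) //; lia.
Qed.

Definition hom (m5 : 'X_{1..5}) (N : nat) : 'X_{1..9} :=
  [multinom (if (i < 5)%N then m5 (@inord 4 i)
             else if nat_of_ord i == 8%N then N - (m5 (@inord 4 2) + m5 (@inord 4 3) + m5 (@inord 4 4))
             else 0)%N | i < 9].

Lemma homE m5 N j : (j < 9)%N -> (hom m5 N)#j =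
  (if (j < 5)%N then m5 (@inord 4 j)
   else if j == 8%N then N - (m5 (@inord 4 2) + m5 (@inord 4 3) + m5 (@inord 4 4))
   else 0)%N.
Proof. by move=> hj; rewrite /hom mnmE inordK. Qed.

Lemma E_sub8 (k : fieldType) m j : E k (m - U_(@inord 8 8) *+ j)%MM = E k m.
Proof.
have h : forall i, (i < 8)%N -> (m - U_(@inord 8 8) *+ j)%MM#i = m#i.
  by move=> i hi; rewrite mnmBE mulmnE mnm1E ieq9 //; [case: eqP => //; lia | lia].
by rewrite /E !h.
Qed.

Section Final.
Variable k : fieldType.
Hypothesis hk : [pchar k] =i pred0.
Local Notation A := {mpoly k[5]}.
Local Notation S := {mpoly k[9]}.
Local Notation D := (@Dder k).
Local Notation phi := (phi k).

Lemma phi_inI p : in_I p -> phi p = 0.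
Proof.
move=> [q ->]; rewrite rmorph_sum big1 // => i _.
by rewrite rmorphM phiIgen mulr0.
Qed.

Lemma ker_phi p : phi p = 0 -> in_I p.
Proof.
move=> hp; have [r [hr hI]] := Red_all p.
have phr : phi r = 0.
  have := phi_inI hI; rewrite rmorphB hp sub0r => /eqP; rewrite oppr_eq0 => /eqP.
  done.
suff r0 : r = 0 by move: hI; rewrite r0 subr0.
apply/eqP; rewrite -msupp_eq0; apply/eqP.
case Er: (msupp r) => [//|m t]; exfalso.
have mr : m \in msupp r by rewrite Er mem_head.
have := @G_bound k hk [seq m' <- msupp r | sweight m' == sweight m] (fun m' => r@_m') 0.
move=> /(_ _ _ _ _ m) h.
have : r@_m = 0.
  apply: h => //.
  - exact/filter_uniq/msupp_uniq.
  - by move=> m'; rewrite mem_filter => /andP [_ /hr].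
  - exact: sep_sw.
  - by rewrite /= big_filter -phi_coef phr coef0.
  - by rewrite mem_filter eqxx mr.
by move/eqP; rewrite mcoeff_eq0 mr.
Qed.

Lemma E_hom (m5 : 'X_{1..5}) N : E k (hom m5 N) = 'X_[m5].
Proof.
rewrite /E !homE //= !expr0 !mulr1 mpolyXE_id prod5 /Au /Av /Ax /Ay /Az /Avar.
by [].
Qed.

Lemma sw_hom (m5 : 'X_{1..5}) N : (m5 (@inord 4 2) + m5 (@inord 4 3) + m5 (@inord 4 4) <= N)%N ->
  sweight (hom m5 N) = N.
Proof. by move=> h; rewrite /sweight !homE //=; lia. Qed.

Lemma mdeg_ge (m5 : 'X_{1..5}) : (m5 (@inord 4 2) + m5 (@inord 4 3) + m5 (@inord 4 4) <= mdeg m5)%N.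
Proof. rewrite mdegE sum5; lia. Qed.

Lemma rees_piece n (f : A) : iter n.+1 D f = 0 -> exists p, phi p = f%:P * 'X^n.
Proof.
move=> hf.
set N := maxn (msize f) n.
set q := \sum_(m5 <- msupp f) f@_m5 *: ('X_[hom m5 N] : S).
have hq : phi q = f *: 'X^N.
  rewrite rmorph_sum.
  have -> : f *: 'X^N = \sum_(m5 <- msupp f) ((f@_m5)%:MP * 'X_[m5]) *: ('X^N : {poly A}).
    rewrite -scaler_suml; congr (_ *: _); rewrite {1}(mpolyE f).
    by apply: eq_bigr => m _; rewrite mul_mpolyC.
  apply: eq_big_seq => m5 hm; rewrite phiZX E_hom sw_hom //.
  apply: leq_trans (mdeg_ge m5) _; apply: leq_trans (ltnW (msize_mdeg_lt hm)) _.
  exact: leq_maxl.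
have [r [hr hI]] := Red_all q.
have phr : phi r = f *: 'X^N.
  have := phi_inI hI; rewrite rmorphB hq => /eqP; rewrite subr_eq0 => /eqP <-.
  done.
set s := [seq m <- msupp r | sweight m == N].
have hcoef : \sum_(m <- s) (r@_m)%:MP * E k m = f.
  by rewrite big_filter -phi_coef phr coefZ coefXn eqxx mulr1.
have hG := @G_bound k hk s (fun m => r@_m) n.+1.
have {hG} hG : forall m, m \in s -> (n < dg m)%N -> r@_m = 0.
  apply: hG.
  - exact/filter_uniq/msupp_uniq.
  - by move=> m; rewrite mem_filter => /andP [_ /hr].
  - exact: sep_sw.
  - by rewrite hcoef.
exists (\sum_(m <- s) r@_m *: 'X_[(m - U_(@inord 8 8) *+ (N - n))%MM]).
rewrite rmorph_sum mul_polyC -hcoef scaler_suml.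
apply: eq_big_seq => m hm; rewrite phiZX E_sub8.
have [h0|hnz] := eqVneq (r@_m) 0; first by rewrite h0 mpolyC0 !mul0r !scale0r.
have hd : (dg m <= n)%N.
  by rewrite leqNgt; apply/negP => /(hG m hm) /eqP; rewrite (negbTE hnz).
congr (_ *: 'X^_).
move: hm; rewrite mem_filter => /andP [/eqP hsw _].
have hnN : (n <= N)%N by exact: leq_maxr.
move: hsw hd; rewrite /sweight /dg !mnmBE !mulmnE !mnm1E !ieq9 //=; lia.
Qed.

End Final.

Lemma rees_all (k : fieldType) (hk : [pchar k] =i pred0) (P : {poly {mpoly k[5]}}) :
  in_rees P -> exists p, phi k p = P.
Proof.
move=> hP.
suff h : forall N, exists p, phi k p = \sum_(i < N) (P`_i)%:P * 'X^i.
  have [p hp] := h (size P); exists p; rewrite hp -[RHS]coefK poly_def.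
  by apply: eq_bigr => i _; rewrite mul_polyC.
elim=> [|N [p hp]]; first by exists 0; rewrite rmorph0 big_ord0.
have [p' hp'] := rees_piece hk (hP N).
by exists (p + p'); rewrite rmorphD hp hp' big_ord_recr.
Qed.

Theorem lemma3p3 (k : closedFieldType) (hk : [pchar k] =i pred0) :
  exists phi : {rmorphism {mpoly k[9]} -> {poly {mpoly k[5]}}},
    [/\ forall c : k, phi c%:MP = (c%:MP)%:P,
        forall m : 'X_{1..9}, exists a : {mpoly k[5]},
          phi 'X_[m] = a%:P * 'X^(sweight m),
        forall P : {poly {mpoly k[5]}},
          in_rees P <-> exists p, phi p = P
      & forall p : {mpoly k[9]}, phi p = 0 <-> in_I p].
Proof.
exists (phi k); split.
- by move=> c; exact: phiC.
- by move=> m; exists (E k m); exact: phiX.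
- move=> P; split; first exact: rees_all.
  by move=> [p <-]; exact: phi_rees.
- by move=> p; split; [exact: ker_phi | exact: phi_inI].
Qed.
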